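(* Let $d\ge 2$ and for $x,y,z\in\mathbb S^{d-1}$ let $A^2(x,y,z)$ be the square of the area of the triangle with vertices $x,y,z$. Then the uniform surface measure $\sigma$ maximizes $I_{A^2}(\mu)=\iiint A^2(x,y,z)\,d\mu(x)d\mu(y)d\mu(z)$ over $\mu\in\mathcal P(\mathbb S^{d-1})$. Moreover, any balanced isotropic measure $\mu\in\mathcal P(\mathbb S^{d-1})$ maximizes $I_{A^2}$.
   Context: $\mathbb S^{d-1}$ is the unit sphere in $\mathbb R^d$, $\mathcal P(\mathbb S^{d-1})$ the Borel probability measures on it, and $\sigma$ the normalized surface measure. $\mu$ is isotropic if $\int xx^T\,d\mu(x)=\frac1d I_d$, and balanced if $\int x\,d\mu(x)=0$. *)

(* Defs.v *)
From HB Require Import structures.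
From mathcomp Require Import all_boot all_order all_algebra.
From mathcomp Require Import all_classical all_reals all_analysis.
Set Implicit Arguments. Unset Strict Implicit. Unset Printing Implicit Defensive.
Import Order.TTheory GRing.Theory Num.Theory numFieldNormedType.Exports.
Local Open Scope classical_set_scope.
Local Open Scope ring_scope.

Definition euclid (R : realType) (d : nat) :=
  g_sigma_algebraType (open : set_system 'rV[R]_d).

Definition dotv (R : realType) (d : nat) (u v : 'rV[R]_d) : R :=
  \sum_(i < d) u 0 i * v 0 i.
Definition sqnorm (R : realType) (d : nat) (u : 'rV[R]_d) : R := dotv u u.

Definition sphere (R : realType) (d : nat) : set (euclid R d) :=
  [set x | sqnorm (x : 'rV[R]_d) = 1].

(* Borel probability measures on S^{d-1}: Borel probability measures on R^d
   concentrated on the sphere. *)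
Definition on_sphere (R : realType) (d : nat) (mu : probability (euclid R d) R) :=
  mu (~` @sphere R d) = 0%E.

(* Square of the area of the triangle with vertices x, y, z in R^d:
   (1/4) * Gram determinant of the edge vectors u = y - x, v = z - x. *)
Definition area2 (R : realType) (d : nat) (x y z : 'rV[R]_d) : R :=
  let u := y - x in let v := z - x in
  (sqnorm u * sqnorm v - (dotv u v) ^+ 2) / 4.

Definition IA2 (R : realType) (d : nat) (mu : probability (euclid R d) R) : \bar R :=
  (\int[mu]_x \int[mu]_y \int[mu]_z (area2 (x : 'rV[R]_d) y z)%:E)%E.

Definition maximizes_IA2 (R : realType) (d : nat) (mu : probability (euclid R d) R) :=
  forall nu : probability (euclid R d) R, on_sphere nu -> (IA2 nu <= IA2 mu)%E.

Definition orthogonal_mx (R : realType) (d : nat) (Q : 'M[R]_d) :=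
  Q *m Q^T = 1%:M.

(* The normalized surface measure sigma: the rotation-invariant
   Borel probability measure on S^{d-1}. *)
Definition is_normalized_surface_measure (R : realType) (d : nat)
    (sigma : probability (euclid R d) R) :=
  on_sphere sigma /\
  forall (Q : 'M[R]_d) (A : set (euclid R d)), orthogonal_mx Q -> measurable A ->
    sigma ((fun x : euclid R d => (x : 'rV[R]_d) *m Q : euclid R d) @^-1` A) = sigma A.

Definition balanced (R : realType) (d : nat) (mu : probability (euclid R d) R) :=
  forall i : 'I_d, (\int[mu]_x ((x : 'rV[R]_d) 0 i)%:E)%E = 0%E.

Definition isotropic (R : realType) (d : nat) (mu : probability (euclid R d) R) :=
  forall i j : 'I_d, (\int[mu]_x ((x : 'rV[R]_d) 0 i * x 0 j)%:E)%E
                     = ((1%:M : 'M[R]_d) i j / d%:R)%:E.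

(* Main.v *)
Require Import Defs.
From HB Require Import structures.
From mathcomp Require Import all_boot all_order all_algebra.
From mathcomp Require Import all_classical all_reals all_analysis.
From mathcomp Require Import ring lra.
From mathcomp Require Import fingroup perm.
Import Order.TTheory GRing.Theory Num.Theory numFieldNormedType.Exports.
Local Open Scope classical_set_scope.
Local Open Scope ring_scope.

Section S.
Variables (R : realType) (d : nat).
Notation E := (euclid R d).

Lemma cont_meas (f : 'rV[R]_d -> R) : continuous f ->
  measurable_fun [set: E] (f : E -> R).
Proof.
move=> /continuousP cf; apply: (measurability _ (measurable_realfun.RGenOpens.measurableE R)).
move=> _ [_ [a [b ->] <-]]; rewrite setTI; apply: sub_sigma_algebra.
exact/cf/interval_open.
Qed.

Lemma coord_meas i : measurable_fun [set: E] (fun x : E => (x : 'rV[R]_d) 0 i).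
Proof. apply: cont_meas. exact: (@coord_continuous R 1 d 0 i). Qed.

Lemma entry_cont (Q : 'M[R]_d) i j :
  continuous (fun x : 'rV[R]_d => (x *m Q) i j).
Proof.
have -> : (fun x : 'rV[R]_d => (x *m Q) i j) =
   (fun x => \sum_(k < d) (x i k * Q k j)).
  by apply/funext => x; rewrite mxE.
apply: (@continuous_big R _ +%R 0 xpredT add_continuous) => k _ x.
have h := (cvgMl (@coord_continuous R 1 d i k x)). exact: h.
Qed.

Lemma mulmx_cont (Q : 'M[R]_d) : continuous (fun x : 'rV[R]_d => x *m Q).
Proof.
move=> x A /= [P Pnb sPA].
have H := @filter_forall _ ('I_1 * 'I_d)%type
  (fun ij => [set y : 'rV[R]_d | P ij.1 ij.2 ((y *m Q) ij.1 ij.2)]) (nbhs x).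
have {H} := H _ (fun ij => entry_cont Q ij.1 ij.2 x _ (Pnb ij.1 ij.2)).
move=> H; suff : nbhs x [set y : 'rV[R]_d | A (y *m Q)] by []. have FF : Filter (nbhs x) by apply: nbhs_filter. apply: (filterS _ (H FF)) => y Hy; apply: sPA => i j; exact: (Hy (i, j)).
Qed.


Lemma dotvC (u v : 'rV[R]_d) : dotv u v = dotv v u.
Proof. by apply: eq_bigr => i _; rewrite mulrC. Qed.

Lemma dotvDl (u v w : 'rV[R]_d) : dotv (u + v) w = dotv u w + dotv v w.
Proof. by rewrite /dotv -big_split; apply: eq_bigr => i _; rewrite mxE mulrDl. Qed.

Lemma dotvNl (u w : 'rV[R]_d) : dotv (- u) w = - dotv u w.
Proof. by rewrite /dotv -sumrN; apply: eq_bigr => i _; rewrite mxE mulNr. Qed.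

Lemma dotvBl (u v w : 'rV[R]_d) : dotv (u - v) w = dotv u w - dotv v w.
Proof. by rewrite dotvDl dotvNl. Qed.

Lemma dotvBr (u v w : 'rV[R]_d) : dotv w (u - v) = dotv w u - dotv w v.
Proof. by rewrite dotvC dotvBl !(dotvC w). Qed.

Lemma sqnormB (u v : 'rV[R]_d) : sqnorm (u - v) = sqnorm u - 2 * dotv u v + sqnorm v.
Proof. rewrite /sqnorm dotvBl !dotvBr (dotvC v u); ring. Qed.

Definition bnd (f : E -> R) := exists C, forall x, sphere x -> `|f x| <= C.
Definition good (f : E -> R) := measurable_fun [set: E] f /\ bnd f.

Lemma good_cst c : good (fun _ => c).
Proof. by split; [exact: measurable_cst | exists `|c|]. Qed.

Lemma coord_le1 (x : E) i : sphere x -> `|(x : 'rV[R]_d) 0 i| <= 1.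
Proof.
rewrite /sphere /= /sqnorm /dotv => Hx.
have h : x 0 i * x 0 i <= 1.
  rewrite -Hx (bigD1 i) //= lerDl; apply: sumr_ge0 => j _.
  by rewrite -expr2 sqr_ge0.
by have [a0|a0] := lerP 0 (x 0 i); [rewrite ger0_norm | rewrite ltr0_norm]; nra.
Qed.

Lemma good_coord i : good (fun x : E => (x : 'rV[R]_d) 0 i).
Proof. by split; [exact: coord_meas | exists 1 => x; exact: coord_le1]. Qed.

Lemma goodD f g : good f -> good g -> good (fun x => f x + g x).
Proof.
move=> [mf [C hf]] [mg [D hg]]; split; first exact: measurable_realfun.measurable_funD.
exists (C + D) => x Sx; rewrite (le_trans (ler_normD _ _)) // lerD //.
  exact: hf.
exact: hg.
Qed.

Lemma goodM f g : good f -> good g -> good (fun x => f x * g x).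
Proof.
move=> [mf [C hf]] [mg [D hg]]; split; first exact: measurable_realfun.measurable_funM.
exists (C * D) => x Sx; rewrite normrM ler_pM //; [exact: hf|exact: hg].
Qed.

Lemma goodN f : good f -> good (fun x => - f x).
Proof.
move=> [mf [C hf]]; split; first exact: measurable_realfun.measurable_funN.
by exists C => x Sx; rewrite normrN; exact: hf.
Qed.

Lemma goodB f g : good f -> good g -> good (fun x => f x - g x).
Proof. by move=> hf hg; apply: goodD => //; exact: goodN. Qed.

Lemma good_sum (I : Type) (s : seq I) (F : I -> E -> R) :
  (forall i, good (F i)) -> good (fun x => \sum_(i <- s) F i x).
Proof.
move=> h; elim: s => [|a s ih].
  rewrite (_ : (fun x => _) = fun=> 0); first exact: good_cst.
  by apply/funext => x; rewrite big_nil.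
rewrite (_ : (fun x => _) = fun x => F a x + \sum_(i <- s) F i x).
  exact: goodD.
by apply/funext => x; rewrite big_cons.
Qed.

Definition goodv (a : E -> 'rV[R]_d) := forall i, good (fun x => a x 0 i).

Lemma goodv_id : goodv (fun x : E => (x : 'rV[R]_d)).
Proof. exact: good_coord. Qed.

Lemma goodv_cst v : goodv (fun _ => v).
Proof. move=> i; exact: good_cst. Qed.

Lemma goodvB a b : goodv a -> goodv b -> goodv (fun x => a x - b x).
Proof.
move=> ha hb i; rewrite (_ : (fun x => _) = fun x => a x 0 i - b x 0 i).
  exact: goodB.
by apply/funext => x; rewrite !mxE.
Qed.

Lemma good_dot a b : goodv a -> goodv b -> good (fun x => dotv (a x) (b x)).
Proof. by move=> ha hb; apply: good_sum => i; apply: goodM. Qed.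

Lemma good_area2 a b c : goodv a -> goodv b -> goodv c ->
  good (fun x => area2 (a x) (b x) (c x)).
Proof.
move=> ha hb hc; rewrite /area2 /=; apply: goodM; last exact: good_cst.
apply: goodB; first by apply: goodM; apply: good_dot; apply: goodvB.
rewrite (_ : (fun x => _) = fun x => dotv (b x - a x) (c x - a x) * dotv (b x - a x) (c x - a x)).
  by apply: goodM; apply: good_dot; apply: goodvB.
by apply/funext => x; rewrite expr2.
Qed.

Lemma sphere_meas : measurable (@sphere R d : set E).
Proof.
have := (@good_dot _ _ goodv_id goodv_id).1 measurableT [set 1] (measurable_set1 1).
by rewrite setTI.
Qed.


Lemma CS (a b : 'I_d -> R) :
  (\sum_i a i * b i) * (\sum_i a i * b i) <=
  (\sum_i a i * a i) * (\sum_i b i * b i).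
Proof.
have key : \sum_i \sum_j (a i * b j - a j * b i) ^+ 2 =
   \sum_i \sum_j (a i * a i * (b j * b j)) + \sum_i \sum_j (a j * a j * (b i * b i))
   - 2 * \sum_i \sum_j (a i * b i * (a j * b j)).
  rewrite mulr_sumr -big_split -sumrB /=; apply: eq_bigr => i _.
  rewrite mulr_sumr -big_split -sumrB /=; apply: eq_bigr => j _; ring.
have e1 : \sum_i \sum_j (a j * a j * (b i * b i)) = \sum_i \sum_j (a i * a i * (b j * b j)).
  by rewrite exchange_big.
have e2 : (\sum_i a i * a i) * (\sum_i b i * b i) = \sum_i \sum_j (a i * a i * (b j * b j)).
  by rewrite mulr_suml; apply: eq_bigr => i _; rewrite mulr_sumr.
have e3 : (\sum_i a i * b i) * (\sum_i a i * b i) = \sum_i \sum_j (a i * b i * (a j * b j)).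
  by rewrite mulr_suml; apply: eq_bigr => i _; rewrite mulr_sumr.
have pos : 0 <= \sum_i \sum_j (a i * b j - a j * b i) ^+ 2.
  by apply: sumr_ge0 => i _; apply: sumr_ge0 => j _; exact: sqr_ge0.
rewrite e2 e3; rewrite key e1 in pos; lra.
Qed.

Section Meas.
Variable nu : probability E R.
Hypothesis hS : on_sphere nu.
Local Notation S := (@sphere R d : set E).

Lemma nuS : nu S = 1%E.
Proof.
have := probability_setT nu.
rewrite -(setUv S) measureU //; first by move=> <-; set X := (X in _ = (_ + X)%E); rewrite (_ : X = 0%E) ?adde0 //; exact: hS.
- exact: sphere_meas.
- apply: measurableC; exact: sphere_meas.
- by rewrite setICr.
Qed.

Lemma intS (f : E -> R) : measurable_fun [set: E] f ->
  (\int[nu]_x (f x)%:E = \int[nu]_(x in S) (f x)%:E)%E.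
Proof.
move=> mf; rewrite -(setUv S) integral_setU //.
- rewrite (@null_set_integral _ _ _ nu (~` S)) ?adde0 //.
  + by apply: measurableC; exact: sphere_meas.
  + apply/measurable_realfun.measurable_EFinP; exact: measurable_funTS.
- exact: sphere_meas.
- by apply: measurableC; exact: sphere_meas.
- rewrite setUv; exact/measurable_realfun.measurable_EFinP.
- by rewrite /disj_set setICr.
Qed.

Definition Ei (f : E -> R) := fine (\int[nu]_(x in S) (f x)%:E)%E.

Lemma good_int f : good f -> nu.-integrable S (EFin \o f).
Proof.
move=> [mf [C hC]].
apply: (@le_integrable _ _ _ nu S sphere_meas _ (EFin \o cst C)).
- exact/measurable_realfun.measurable_EFinP/measurable_funTS.
- move=> x Sx /=; rewrite lee_fin.
  exact: (le_trans (hC x Sx) (ler_norm C)).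
- apply: finite_measure_integrable_cst; exact: sphere_meas.
Qed.

Lemma intE f : good f -> (\int[nu]_(x in S) (f x)%:E = (Ei f)%:E)%E.
Proof.
move=> gf; rewrite /Ei fineK //.
exact: (integrable_fin_num sphere_meas (good_int _ gf)).
Qed.

Lemma Ei_eqS f g : (forall x, S x -> f x = g x) -> Ei f = Ei g.
Proof.
move=> h; rewrite /Ei; congr fine; apply: eq_integral => x /set_mem Sx.
by rewrite h.
Qed.

Lemma EiD f g : good f -> good g -> Ei (fun x => f x + g x) = Ei f + Ei g.
Proof.
move=> gf gg; apply: EFin_inj; rewrite -intE; last exact: goodD.
rewrite EFinD -!intE //.
under eq_integral do rewrite EFinD.
exact: (integralD sphere_meas (good_int _ gf) (good_int _ gg)).
Qed.

Lemma EiZ c f : good f -> Ei (fun x => c * f x) = c * Ei f.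
Proof.
move=> gf; apply: EFin_inj; rewrite -intE; last by apply: goodM => //; exact: good_cst.
rewrite EFinM -!intE //.
under eq_integral do rewrite EFinM.
exact: (integralZl sphere_meas (good_int _ gf)).
Qed.

Lemma Ei_cst c : Ei (fun _ => c) = c.
Proof.
rewrite /Ei (_ : (fun x => _) = cst c%:E) // integral_cst; last exact: sphere_meas.
by set X := (X in (_ * X)%E); rewrite (_ : X = 1%E) ?mule1 //; exact: nuS.
Qed.

Lemma Ei_sum (I : Type) (s : seq I) (F : I -> E -> R) :
  (forall i, good (F i)) ->
  Ei (fun x => \sum_(i <- s) F i x) = \sum_(i <- s) Ei (F i).
Proof.
move=> h; elim: s => [|a s ih].
  rewrite big_nil; transitivity (Ei (fun _ => 0)); last exact: Ei_cst.
  by congr Ei; apply/funext => x; rewrite big_nil.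
rewrite big_cons -ih -EiD //; last exact: good_sum.
by congr Ei; apply/funext => x; rewrite big_cons.
Qed.

Lemma Ei_le f g : good f -> good g -> (forall x, S x -> f x <= g x) -> Ei f <= Ei g.
Proof.
move=> gf gg h; rewrite -lee_fin -!intE //.
apply: le_integral => //.
- exact: sphere_meas.
- exact: (good_int _ gf).
- exact: (good_int _ gg).
- by move=> x /set_mem Sx; rewrite lee_fin; apply: h.
Qed.


Definition mv : 'rV[R]_d := \row_i Ei (fun x : E => (x : 'rV[R]_d) 0 i).
Definition Mm i j := Ei (fun x : E => (x : 'rV[R]_d) 0 i * (x : 'rV[R]_d) 0 j).
Definition Bf (p q : 'rV[R]_d) := \sum_(i < d) \sum_(j < d) p 0 i * q 0 j * Mm i j.
Definition Fr := \sum_(i < d) \sum_(j < d) Mm i j ^+ 2.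

Lemma MmC i j : Mm i j = Mm j i.
Proof. by rewrite /Mm; congr Ei; apply/funext => x; rewrite mulrC. Qed.

Lemma BfC p q : Bf p q = Bf q p.
Proof.
rewrite /Bf exchange_big; apply: eq_bigr => i _; apply: eq_bigr => j _.
rewrite (MmC j i); ring.
Qed.

Lemma BfBl p q r : Bf (p - q) r = Bf p r - Bf q r.
Proof.
rewrite /Bf -sumrB; apply: eq_bigr => i _; rewrite -sumrB; apply: eq_bigr => j _.
rewrite !mxE; ring.
Qed.

Lemma BfBr p q r : Bf r (p - q) = Bf r p - Bf r q.
Proof. by rewrite BfC BfBl !(BfC r). Qed.

Lemma good_Bf a b : goodv a -> goodv b -> good (fun x => Bf (a x) (b x)).
Proof.
move=> ha hb; apply: good_sum => i; apply: good_sum => j.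
by apply: goodM; [apply: goodM|exact: good_cst].
Qed.

Lemma Ei_dot p : Ei (fun z : E => dotv p z) = dotv p mv.
Proof.
rewrite /dotv Ei_sum; last by move=> i; apply: goodM; [exact: good_cst | exact: good_coord].
apply: eq_bigr => i _; rewrite EiZ ?mxE //; exact: good_coord.
Qed.

Lemma Ei_dot2 p q : Ei (fun z : E => dotv p z * dotv q z) = Bf p q.
Proof.
transitivity (Ei (fun z : E => \sum_(i < d) \sum_(j < d)
    (p 0 i * q 0 j) * ((z : 'rV[R]_d) 0 i * (z : 'rV[R]_d) 0 j))).
  congr Ei; apply/funext => z; rewrite /dotv mulr_suml; apply: eq_bigr => i _.
  rewrite mulr_sumr; apply: eq_bigr => j _; ring.
rewrite Ei_sum; last first.
  move=> i; apply: good_sum => j; apply: goodM; first exact: good_cst.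
  by apply: goodM; exact: good_coord.
apply: eq_bigr => i _; rewrite Ei_sum; last first.
  move=> j; apply: goodM; first exact: good_cst.
  by apply: goodM; exact: good_coord.
apply: eq_bigr => j _; rewrite EiZ //.
by apply: goodM; exact: good_coord.
Qed.

Lemma Ei_B1 p : Ei (fun z : E => Bf p z) = Bf p mv.
Proof.
transitivity (Ei (fun z : E => \sum_(i < d) \sum_(j < d)
    (p 0 i * Mm i j) * (z : 'rV[R]_d) 0 j)).
  congr Ei; apply/funext => z; apply: eq_bigr => i _; apply: eq_bigr => j _; ring.
rewrite Ei_sum; last first.
  move=> i; apply: good_sum => j; apply: goodM; first exact: good_cst.
  exact: good_coord.
apply: eq_bigr => i _; rewrite Ei_sum; last first.
  move=> j; apply: goodM; first exact: good_cst.
  exact: good_coord.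
apply: eq_bigr => j _; rewrite EiZ; last exact: good_coord.
rewrite mxE; ring.
Qed.

Lemma Ei_B2 : Ei (fun z : E => Bf z z) = Fr.
Proof.
transitivity (Ei (fun z : E => \sum_(i < d) \sum_(j < d)
    Mm i j * ((z : 'rV[R]_d) 0 i * (z : 'rV[R]_d) 0 j))).
  congr Ei; apply/funext => z; apply: eq_bigr => i _; apply: eq_bigr => j _; ring.
rewrite Ei_sum; last first.
  move=> i; apply: good_sum => j; apply: goodM; first exact: good_cst.
  by apply: goodM; exact: good_coord.
apply: eq_bigr => i _; rewrite Ei_sum; last first.
  move=> j; apply: goodM; first exact: good_cst.
  by apply: goodM; exact: good_coord.
apply: eq_bigr => j _; rewrite EiZ; last by apply: goodM; exact: good_coord.
by rewrite expr2.
Qed.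

Lemma Ei_comb c0 c1 p1 c2 p2 c3 q1 r1 c4 q2 r2 c5 a c6 :
  Ei (fun z : E => c0 + c1 * dotv p1 z + c2 * dotv p2 z
     + c3 * (dotv q1 z * dotv r1 z) + c4 * (dotv q2 z * dotv r2 z)
     + c5 * Bf a z + c6 * Bf z z) =
  c0 + c1 * dotv p1 mv + c2 * dotv p2 mv + c3 * Bf q1 r1 + c4 * Bf q2 r2
     + c5 * Bf a mv + c6 * Fr.
Proof.
have gd p : good (fun z : E => dotv p z) by apply: good_dot; [exact: goodv_cst|exact: goodv_id].
have gdd p q : good (fun z : E => dotv p z * dotv q z) by apply: goodM.
have gB p : good (fun z : E => Bf p z) by apply: good_Bf; [exact: goodv_cst|exact: goodv_id].
have gBB : good (fun z : E => Bf z z) by apply: good_Bf; exact: goodv_id.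
have gc c : good (fun _ : E => c) by exact: good_cst.
rewrite !EiD; try by repeat (apply: goodD || apply: goodM).
by rewrite !EiZ // Ei_cst !Ei_dot !Ei_dot2 Ei_B1 Ei_B2.
Qed.


Definition P1 (x y : 'rV[R]_d) :=
  (sqnorm (y - x) * (1 + sqnorm x) - dotv (y - x) x ^+ 2
   - 2 * sqnorm (y - x) * dotv x mv + 2 * dotv (y - x) x * dotv (y - x) mv
   - Bf (y - x) (y - x)) / 4.

Definition P2 (x : 'rV[R]_d) :=
  ((1 + sqnorm x) ^+ 2 - sqnorm x ^+ 2 - 2 * dotv x mv - Bf x x
   + (2 * dotv x mv - 2) * dotv x mv - Bf x x + 2 * Bf x mv
   - 2 * sqnorm x * dotv mv mv - Fr + 2 * Bf x mv) / 4.

Definition Val := (3 - 6 * dotv mv mv + 6 * Bf mv mv - 3 * Fr) / 4.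

Lemma step1 (x y : E) :
  (\int[nu]_z (area2 (x : 'rV[R]_d) y z)%:E = (P1 x y)%:E)%E.
Proof.
have ga : good (fun z : E => area2 (x : 'rV[R]_d) y z).
  by apply: good_area2; [exact: goodv_cst|exact: goodv_cst|exact: goodv_id].
rewrite intS; last exact: ga.1.
rewrite intE //; congr EFin.
set u := (y : 'rV[R]_d) - x.
rewrite (@Ei_eqS _ (fun z : E => (sqnorm u * (1 + sqnorm x) - dotv u x ^+ 2) / 4
   + (- sqnorm u / 2) * dotv x z + (dotv u x / 2) * dotv u z
   + (- 1 / 4) * (dotv u z * dotv u z) + 0 * (dotv u z * dotv u z)
   + 0 * Bf u z + 0 * Bf z z)).
  by rewrite Ei_comb /P1 -/u; field.
move=> z Sz; rewrite /area2 /= -/u sqnormB dotvBr (dotvC z x).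
by rewrite /sphere /= in Sz; rewrite Sz; field.
Qed.


Lemma good2 f : good f -> good (fun x => f x ^+ 2).
Proof.
move=> gf; rewrite (_ : (fun x => _) = fun x => f x * f x); first exact: goodM.
by apply/funext => x; rewrite expr2.
Qed.

Lemma good_sqn a : goodv a -> good (fun x => sqnorm (a x)).
Proof. by move=> ha; apply: good_dot. Qed.

Ltac gtac := repeat match goal with
 | |- good _ => first [exact: good_cst | apply: good_sqn | apply: good_dot
      | apply: good_Bf | apply: goodB | apply: goodD | apply: goodM | apply: good2]
 | |- goodv _ => first [exact: goodv_cst | exact: goodv_id | apply: goodvB]
 end.

Lemma step2 (x : E) :
  (\int[nu]_y (P1 x y)%:E = (P2 x)%:E)%E.
Proof.
have gP : good (fun y : E => P1 x y) by rewrite /P1; gtac.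
rewrite intS; last exact: gP.1.
rewrite intE //; congr EFin.
rewrite (@Ei_eqS _ (fun y : E =>
     ((1 + sqnorm x) ^+ 2 - sqnorm x ^+ 2 - 2 * dotv x mv - Bf x x) / 4
   + ((2 * dotv x mv - 2) / 4) * dotv x y + (- 2 * sqnorm x / 4) * dotv mv y
   + (- 1 / 4) * (dotv x y * dotv x y) + (2 / 4) * (dotv x y * dotv mv y)
   + (2 / 4) * Bf x y + (- 1 / 4) * Bf y y)).
  by rewrite Ei_comb /P2; field.
move=> y Sy; rewrite /P1 sqnormB !dotvBl BfBl !BfBr (BfC y x) (dotvC y x) (dotvC y mv).
rewrite /sphere /= in Sy; rewrite Sy /sqnorm; by field.
Qed.

Lemma step3 : (\int[nu]_x (P2 x)%:E = Val%:E)%E.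
Proof.
have gP : good (fun x : E => P2 x) by rewrite /P2; gtac.
rewrite intS; last exact: gP.1.
rewrite intE //; congr EFin.
rewrite (@Ei_eqS _ (fun x : E =>
     (3 - 2 * dotv mv mv - Fr) / 4
   + (- 1) * dotv mv x + 0 * dotv mv x
   + (1 / 2) * (dotv mv x * dotv mv x) + 0 * (dotv mv x * dotv mv x)
   + 1 * Bf mv x + (- 1 / 2) * Bf x x)).
  by rewrite Ei_comb /Val; field.
move=> x Sx; rewrite /P2 (dotvC x mv) (BfC x mv).
rewrite /sphere /= in Sx; rewrite Sx; by field.
Qed.

Lemma IA2_val : IA2 nu = Val%:E.
Proof.
rewrite /IA2; transitivity (\int[nu]_x (P2 x)%:E)%E; last exact: step3.
apply: eq_integral => x _; transitivity (\int[nu]_y (P1 x y)%:E)%E; last exact: step2.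
apply: eq_integral => y _; exact: step1.
Qed.


Lemma trace1 : \sum_(i < d) Mm i i = 1.
Proof.
rewrite /Mm -Ei_sum; last by move=> i; apply: goodM; exact: good_coord.
transitivity (Ei (fun _ => 1)); last exact: Ei_cst.
by apply: Ei_eqS => x; rewrite /sphere /= /sqnorm /dotv.
Qed.

Lemma Fr_ge : (0 < d)%N -> d%:R^-1 <= Fr.
Proof.
move=> d0.
have h1 : \sum_(i < d) Mm i i * Mm i i <= Fr.
  apply: ler_sum => i _; rewrite (bigD1 i) //= -expr2 lerDl.
  by apply: sumr_ge0 => j _; exact: sqr_ge0.
have h2 := CS (fun i => Mm i i) (fun _ => 1).
have e1 : \sum_(i < d) (fun i => Mm i i) i * (fun _ => 1) i = 1.
  transitivity (\sum_(i < d) Mm i i); last exact: trace1.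
  by apply: eq_bigr => i _; rewrite mulr1.
have e2 : \sum_(i < d) (fun _ : 'I_d => (1:R)) i * (fun _ => 1) i = d%:R.
  by rewrite (eq_bigr (fun _ => 1)) ?sumr_const ?card_ord // => i _; rewrite mulr1.
rewrite e1 e2 mul1r in h2.
have dpos : 0 < (d%:R : R) by rewrite ltr0n.
apply: le_trans h1; rewrite -[d%:R^-1]mul1r ler_pdivrMr //.
Qed.

Lemma B_le : Bf mv mv <= dotv mv mv.
Proof.
rewrite -Ei_dot2.
have gs : good (fun z : E => sqnorm z) by gtac.
apply: (@le_trans _ _ (Ei (fun z : E => dotv mv mv * sqnorm z))).
  apply: Ei_le; [gtac | gtac |] => z Sz.
  exact: (CS (fun i => mv 0 i) (fun i => (z : 'rV[R]_d) 0 i)).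
rewrite EiZ // (@Ei_eqS _ (fun _ => 1)); first by rewrite Ei_cst mulr1.
by move=> z; rewrite /sphere.
Qed.

Lemma Val_le : (0 < d)%N -> Val <= (3 - 3 / d%:R) / 4.
Proof.
move=> d0; have h1 := Fr_ge d0; have h2 := B_le.
rewrite /Val; lra.
Qed.

Lemma mv0 : balanced nu -> mv = 0.
Proof.
move=> hb; apply/rowP => i; rewrite !mxE /Ei.
have h := hb i; rewrite intS in h; last exact: coord_meas.
by rewrite h.
Qed.

Lemma Mm_iso : isotropic nu -> forall i j, Mm i j = (1%:M : 'M[R]_d) i j / d%:R.
Proof.
move=> hi i j; rewrite /Mm /Ei.
have h := hi i j; rewrite intS in h; last by apply: measurable_realfun.measurable_funM; exact: coord_meas.
by rewrite h.
Qed.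

Lemma Val_iso : balanced nu -> isotropic nu -> (0 < d)%N -> Val = (3 - 3 / d%:R) / 4.
Proof.
move=> hb hi d0; rewrite /Val mv0 //.
have -> : dotv (0 : 'rV[R]_d) 0 = 0 by apply: big1 => i _; rewrite mxE mul0r.
have -> : Bf (0 : 'rV[R]_d) 0 = 0 by apply: big1 => i _; apply: big1 => j _; rewrite !mxE !mul0r.
have -> : Fr = d%:R^-1.
  rewrite /Fr (eq_bigr (fun _ => d%:R^-1 ^+ 2)); last first.
    move=> i _; rewrite (bigD1 i) //= big1 ?addr0; last first.
      by move=> j ji; rewrite Mm_iso // !mxE eq_sym (negbTE ji) mul0r expr0n.
    by rewrite Mm_iso // !mxE eqxx mul1r.
  rewrite sumr_const card_ord -mulr_natr.
  have dn : (d%:R : R) != 0 by rewrite pnatr_eq0 -lt0n.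
  by field.
have dn : (d%:R : R) != 0 by rewrite pnatr_eq0 -lt0n.
by field.
Qed.

Lemma good_intT f : good f -> nu.-integrable setT (EFin \o f).
Proof.
move=> gf; apply/integrableP; split.
  by apply/measurable_realfun.measurable_EFinP; exact: gf.1.
have := good_int _ gf; move/integrableP => [_ h].
have h1 : (\int[nu]_x `|(EFin \o f) x|)%E = (\int[nu]_(x in S) `|(EFin \o f) x|)%E.
  transitivity (\int[nu]_x (`|f x|)%:E)%E.
    by apply: eq_integral => x _; rewrite /= ?abse_EFin.
  rewrite intS; last first.
    apply: measurableT_comp; [exact: measurable_realfun.normr_measurable | exact: gf.1].
  by apply: eq_integral => x _; rewrite /= ?abse_EFin.
by rewrite h1.
Qed.

End Meas.

Section Sig.
Variable sigma : probability E R.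
Hypothesis hsig : is_normalized_surface_measure sigma.

Lemma phi_meas (Q : 'M[R]_d) : measurable_fun [set: E] (fun x : E => ((x : 'rV[R]_d) *m Q : E)).
Proof.
apply: (@measurability _ _ E E setT _ open) => //.
move=> _ [A oA <-]; rewrite setTI; apply: sub_sigma_algebra.
exact: (proj1 (continuousP _) (mulmx_cont Q) A oA).
Qed.

Lemma inv_Ei (Q : 'M[R]_d) (f g : E -> R) : orthogonal_mx Q -> good f -> good g ->
  (forall x : E, g x = f ((x : 'rV[R]_d) *m Q)) -> Ei sigma g = Ei sigma f.
Proof.
move=> hQ gf gg hg; apply: EFin_inj.
rewrite -!intE // -!(intS sigma hsig.1) //; [|exact: gf.1|exact: gg.1].
have intg : sigma.-integrable ((fun x : E => ((x : 'rV[R]_d) *m Q : E)) @^-1` setT)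
    ((EFin \o f) \o (fun x : E => ((x : 'rV[R]_d) *m Q : E))).
  rewrite preimage_setT (_ : _ \o _ = EFin \o g); first exact: (good_intT sigma hsig.1 _ gg).
  by apply/funext => x; rewrite /= hg.
transitivity (\int[sigma]_(x in (fun x : E => ((x : 'rV[R]_d) *m Q : E)) @^-1` setT)
   ((EFin \o f) \o (fun x : E => ((x : 'rV[R]_d) *m Q : E))) x)%E.
  by rewrite preimage_setT; apply: eq_integral => x _; rewrite /= hg.
rewrite -(integral_pushforward (phi_meas Q) _ intg measurableT); last first.
  by apply/measurable_realfun.measurable_EFinP; exact: gf.1.
apply: eq_measure_integral; first exact: phi_meas.
move=> mphi A mA _ /=.
exact: hsig.2 Q A hQ mA.
Qed.

Let hS := hsig.1.

Lemma EiN f : good f -> Ei sigma (fun x => - f x) = - Ei sigma f.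
Proof.
move=> gf; rewrite (_ : (fun x => - f x) = (fun x => -1 * f x)).
  by rewrite EiZ // mulN1r.
by apply/funext => x; rewrite mulN1r.
Qed.


Lemma sig_m0 i : Ei sigma (fun x : E => (x : 'rV[R]_d) 0 i) = 0.
Proof.
have hQ : orthogonal_mx (- 1%:M : 'M[R]_d).
  by rewrite /orthogonal_mx linearN /= trmx1 mulNmx mulmxN mulmx1 opprK.
have h : Ei sigma (fun x : E => - (x : 'rV[R]_d) 0 i) = Ei sigma (fun x : E => (x : 'rV[R]_d) 0 i).
  apply: (inv_Ei _ _ _ hQ (good_coord i) (goodN _ (good_coord i))) => x.
  by rewrite mulmxN mulmx1 mxE.
rewrite EiN in h; last exact: good_coord.
lra.
Qed.

Lemma sig_off i j : i != j -> Mm sigma i j = 0.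
Proof.
move=> ij.
pose D := \row_k (if k == i then -1 else 1 : R).
have hQ : orthogonal_mx (diag_mx D).
  rewrite /orthogonal_mx tr_diag_mx mul_mx_diag; apply/matrixP => a b; rewrite !mxE.
  have [->|ab] := eqVneq a b; last by rewrite mulr0n mul0r.
  by rewrite mulr1n; case: ifP => _; rewrite ?mulrNN mulr1.
have gm : good (fun x : E => (x : 'rV[R]_d) 0 i * (x : 'rV[R]_d) 0 j).
  by apply: goodM; exact: good_coord.
have h : Ei sigma (fun x : E => - ((x : 'rV[R]_d) 0 i * (x : 'rV[R]_d) 0 j))
    = Ei sigma (fun x : E => (x : 'rV[R]_d) 0 i * (x : 'rV[R]_d) 0 j).
  apply: (inv_Ei _ _ _ hQ gm (goodN _ gm)) => x.
  rewrite mul_mx_diag !mxE eqxx eq_sym (negbTE ij); ring.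
rewrite EiN in h => //.
rewrite /Mm; lra.
Qed.

Lemma sig_diag k l : Mm sigma k k = Mm sigma l l.
Proof.
have hQ : orthogonal_mx (perm_mx (tperm k l) : 'M[R]_d).
  by rewrite /orthogonal_mx tr_perm_mx -perm_mxM mulgV perm_mx1.
have e (x : 'rV[R]_d) : (x *m perm_mx (tperm k l)) 0 k = x 0 l.
  by rewrite -[tperm k l]invgK -col_permE mxE tpermV tpermL.
have gk : good (fun x : E => (x : 'rV[R]_d) 0 k * (x : 'rV[R]_d) 0 k).
  by apply: goodM; exact: good_coord.
have gl : good (fun x : E => (x : 'rV[R]_d) 0 l * (x : 'rV[R]_d) 0 l).
  by apply: goodM; exact: good_coord.
have h : Ei sigma (fun x : E => (x : 'rV[R]_d) 0 l * (x : 'rV[R]_d) 0 l) = Ei sigma (fun x : E => (x : 'rV[R]_d) 0 k * (x : 'rV[R]_d) 0 k).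
  by apply: (inv_Ei _ _ _ hQ gk gl) => x; rewrite e.
by rewrite /Mm h.
Qed.

Lemma sig_diag_val j : (0 < d)%N -> Mm sigma j j = d%:R^-1.
Proof.
move=> d0; have tr := trace1 sigma hS.
rewrite (eq_bigr (fun _ => Mm sigma j j)) in tr; last by move=> k _; exact: sig_diag.
rewrite sumr_const card_ord -mulr_natr in tr.
have dn : (d%:R : R) != 0 by rewrite pnatr_eq0 -lt0n.
by apply: (mulIf dn); rewrite tr mulVf.
Qed.

Lemma sig_bal : balanced sigma.
Proof.
move=> i; rewrite (intS sigma hS); last exact: coord_meas.
by rewrite intE ?sig_m0 //; exact: good_coord.
Qed.

Lemma sig_iso : (0 < d)%N -> isotropic sigma.
Proof.
move=> d0 i j; rewrite (intS sigma hS); last first.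
  by apply: measurable_realfun.measurable_funM; exact: coord_meas.
rewrite intE; last by apply: goodM; exact: good_coord.
congr EFin; rewrite -/(Mm sigma i j) mxE.
have [<-|ij] := eqVneq i j; first by rewrite sig_diag_val // mul1r.
by rewrite sig_off // mul0r.
Qed.

End Sig.
End S.
Theorem theorem4p4 (R : realType) (d : nat) (hd : (2 <= d)%N) :
  (forall sigma : probability (euclid R d) R,
      is_normalized_surface_measure sigma -> maximizes_IA2 sigma) /\
  (forall mu : probability (euclid R d) R,
      on_sphere mu -> balanced mu -> isotropic mu -> maximizes_IA2 mu).
Proof.
have d0 : (0 < d)%N by apply: leq_trans hd.
have part2 : forall mu : probability (euclid R d) R,
    on_sphere mu -> balanced mu -> isotropic mu -> maximizes_IA2 mu.
  move=> mu hmu hb hi nu hnu.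
  rewrite (@IA2_val R d nu hnu) (@IA2_val R d mu hmu) lee_fin.
  rewrite (@Val_iso R d mu hmu hb hi d0).
  exact: (@Val_le R d nu hnu d0).
split => // sigma hsig; apply: part2.
- exact: hsig.1.
- exact: (@sig_bal R d sigma hsig).
- exact: (@sig_iso R d sigma hsig d0).
Qed.
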